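(* Let $B$ be a commutative ring with identity and $A$ a subring of $B$ containing the identity such that for any two distinct maximal ideals $M, M'$ of $B$, $(M\cap A)+(M'\cap A)=A$. Then for any two distinct maximal ideals $M\neq M'$ of $B$, $M\cap A$ and $M'\cap A$ are non-comparable, and $A$ is a weak completely normal subring of $B$.
   Context: $\operatorname{spec} A$ is the set of prime ideals of $A$ with the Zariski topology. A subring $A$ of $B$ is a weak completely normal subring of $B$ if for any two distinct maximal ideals $M\neq M'$ of $B$ such that $M\cap A$ and $M'\cap A$ are non-comparable, $\operatorname{cl}_{\operatorname{spec} A}\{M\cap A\}\cap \operatorname{cl}_{\operatorname{spec} A}\{M'\cap A\}=\emptyset$. *)

(* Defs.v *)
From HB Require Import structures.
From mathcomp Require Import all_boot all_algebra.
Set Implicit Arguments. Unset Strict Implicit. Unset Printing Implicit Defensive.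
Import GRing.Theory.
Local Open Scope ring_scope.

(* Subsets of a ring B are predicates B -> Prop.  A subring A of B is given
   by its carrier predicate S; ideals of A are subsets of S. *)
Section Defs.
Variable B : comNzRingType.

Definition subring_with_1 (S : B -> Prop) : Prop :=
  [/\ S 1, (forall x y, S x -> S y -> S (x - y)) & (forall x y, S x -> S y -> S (x * y))].

Definition is_ideal (S I : B -> Prop) : Prop :=
  [/\ (forall x, I x -> S x), I 0,
      (forall x y, I x -> I y -> I (x + y)) &
      (forall a x, S a -> I x -> I (a * x))].

Definition prime_ideal (S P : B -> Prop) : Prop :=
  [/\ is_ideal S P, ~ P 1 &
      forall a b, S a -> S b -> P (a * b) -> P a \/ P b].

Definition fullB : B -> Prop := fun _ => True.

Definition maximal_ideal (M : B -> Prop) : Prop :=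
  [/\ is_ideal fullB M, ~ M 1 &
      forall J, is_ideal fullB J -> (forall x, M x -> J x) ->
        (forall x, J x <-> M x) \/ (forall x, J x)].

Definition same_set (I J : B -> Prop) : Prop := forall x, I x <-> J x.

Definition contract (S M : B -> Prop) : B -> Prop := fun x => M x /\ S x.

Definition ideal_sum_is_whole (S I J : B -> Prop) : Prop :=
  forall a, S a <-> exists x y, [/\ I x, J y & a = x + y].

Definition ideals_comparable (I J : B -> Prop) : Prop :=
  (forall x, I x -> J x) \/ (forall x, J x -> I x).

Definition zariski_V (S E : B -> Prop) : (B -> Prop) -> Prop :=
  fun Q => prime_ideal S Q /\ forall x, E x -> Q x.

Definition zariski_closure (S : B -> Prop) (T : (B -> Prop) -> Prop)
  : (B -> Prop) -> Prop :=
  fun Q => prime_ideal S Q /\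
    forall E, (forall x, E x -> S x) ->
      (forall P, T P -> zariski_V S E P) -> zariski_V S E Q.

(* the singleton {P} in spec A (points up to extensional equality) *)
Definition singleton_pt (P : B -> Prop) : (B -> Prop) -> Prop :=
  fun Q => same_set Q P.

Definition weak_completely_normal (S : B -> Prop) : Prop :=
  forall M M', maximal_ideal M -> maximal_ideal M' -> ~ same_set M M' ->
    ~ ideals_comparable (contract S M) (contract S M') ->
    forall Q, ~ (zariski_closure S (singleton_pt (contract S M)) Q /\
                 zariski_closure S (singleton_pt (contract S M')) Q).

End Defs.

(* Main.v *)
Require Import Defs.
From mathcomp Require Import all_boot all_algebra.
From Stdlib Require Import Classical.
Import GRing.Theory.
Local Open Scope ring_scope.

Section Aux.
Variable B : comNzRingType.

Lemma max_prime (M : B -> Prop) : maximal_ideal M ->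
  forall a b, M (a * b) -> M a \/ M b.
Proof.
case=> [[_ M0 MD MM] M1 Mmax] a b Mab.
case: (Classical_Prop.classic (M a)) => Ma; first by left.
right.
pose J := fun x => exists m r, M m /\ x = m + r * a.
have HJ : is_ideal (@fullB B) J.
  split=> //.
  - by exists 0, 0; split=> //; rewrite mul0r addr0.
  - move=> x y [m1 [r1 [H1 ->]]] [m2 [r2 [H2 ->]]].
    exists (m1 + m2), (r1 + r2); split; first exact: MD.
    by rewrite mulrDl !addrA; congr (_ + _); rewrite -!addrA (addrC (r1 * a)).
  - move=> c x _ [m [r [H ->]]]; exists (c * m), (c * r); split.
      exact: MM.
    by rewrite mulrDr mulrA.
have MJ : forall x, M x -> J x.
  by move=> x Mx; exists x, 0; split=> //; rewrite mul0r addr0.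
case: (Mmax J HJ MJ) => [HS | HT].
  exfalso; apply: Ma; apply/HS; exists 0, 1; split=> //; by rewrite mul1r add0r.
have [m [r [Mm E]]] := HT 1.
have -> : b = m * b + r * (a * b) by rewrite mulrA -mulrDl -E mul1r.
apply: MD; [rewrite mulrC|]; exact: MM.
Qed.

Lemma S0 (S : B -> Prop) : subring_with_1 S -> S 0.
Proof. by case=> H1 Hsb _; rewrite -(subrr 1); apply: Hsb. Qed.

Lemma SD (S : B -> Prop) : subring_with_1 S -> forall x y, S x -> S y -> S (x + y).
Proof.
move=> HS x y Sx Sy; have [_ Hsb _] := HS.
have -> : x + y = x - (0 - y) by rewrite sub0r opprK.
by apply: (Hsb) => //; apply: (Hsb) => //; apply: S0.
Qed.

Lemma contract_prime (S M : B -> Prop) : subring_with_1 S -> maximal_ideal M ->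
  prime_ideal S (contract S M).
Proof.
move=> HS HM; have [H1 Hsb HMul] := HS.
have HM' := HM; case: HM' => [[_ M0 MD MM] M1 _].
split.
- split.
  + by move=> x [].
  + by split=> //; apply: S0.
  + by move=> x y [? ?] [? ?]; split; [apply: MD | apply: SD].
  + by move=> a x Sa [Mx Sx]; split; [apply: MM | apply: HMul].
- by case.
- move=> a b Sa Sb [Mab _]; case: (@max_prime M HM _ _ Mab) => H; [left|right]; split => //.
Qed.

Lemma prime_ext (S P P' : B -> Prop) : same_set P' P -> prime_ideal S P -> prime_ideal S P'.
Proof.
move=> E [[HS H0 HD HM] H1 Hp]; split.
- split.
  + by move=> x /E; apply: HS.
  + by apply/E.
  + by move=> x y /E ? /E ?; apply/E; apply: HD.
  + by move=> a x Sa /E ?; apply/E; apply: HM.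
- by move/E.
- by move=> a b Sa Sb /E Hab; case: (Hp a b Sa Sb Hab) => H; [left|right]; apply/E.
Qed.

End Aux.

Theorem lemma4p4 (B : comNzRingType) (S : B -> Prop) :
  subring_with_1 S ->
  (forall M M' : B -> Prop, maximal_ideal M -> maximal_ideal M' ->
     ~ same_set M M' ->
     ideal_sum_is_whole S (contract S M) (contract S M')) ->
  (forall M M' : B -> Prop, maximal_ideal M -> maximal_ideal M' ->
     ~ same_set M M' -> ~ ideals_comparable (contract S M) (contract S M'))
  /\ weak_completely_normal S.
Proof.
move=> HS Hsum; have [S1 _ _] := HS.
split.
- move=> M M' HM HM' Hne Hc.
  have [x [y [Hx Hy E]]] := (Hsum M M' HM HM' Hne 1).1 S1.
  have [[_ _ MD _] M1 _] := HM; have [[_ _ MD' _] M1' _] := HM'.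
  case: Hc => Hsub.
  + apply: M1'; rewrite E; apply: MD'; [exact: (Hsub x Hx).1 | exact: Hy.1].
  + apply: M1; rewrite E; apply: MD; [exact: Hx.1 | exact: (Hsub y Hy).1].
- move=> M M' HM HM' Hne _ Q [[HQ C1] [_ C2]].
  have V1 := C1 (contract S M) (fun x H => H.2)
     (fun P HP => conj (@prime_ext B S _ _ HP (@contract_prime B S M HS HM)) (fun x Hx => (HP x).2 Hx)).
  have V2 := C2 (contract S M') (fun x H => H.2)
     (fun P HP => conj (@prime_ext B S _ _ HP (@contract_prime B S M' HS HM')) (fun x Hx => (HP x).2 Hx)).
  have [x [y [Hx Hy E]]] := (Hsum M M' HM HM' Hne 1).1 S1.
  case: HQ => [[_ _ QD _] Q1 _]; apply: Q1; rewrite E.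
  by apply: QD; [apply: V1.2 | apply: V2.2].
Qed.
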